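(* $\mathfrak{L}(\mathbb{Q}^+) \subsetneq \mathfrak{L}(SL(2,\mathbb{Q}))$.
   Context: For a group $G$ with identity $e$, a $G$-automaton is a tuple $(Q,\Sigma,G,\delta,q_0,Q_a)$ where $Q$ is a finite set of states, $\Sigma$ a finite input alphabet, $q_0\in Q$ the initial state, $Q_a\subseteq Q$ the accepting states, and $\delta$ assigns to each $(q,\sigma)\in Q\times(\Sigma\cup\{\varepsilon\})$ a finite set of pairs $(q',m)\in Q\times G$. The register holds an element of $G$, initially $e$; using a transition $(q',m)\in\delta(q,\sigma)$ the automaton reads $\sigma$ (or nothing), moves to $q'$ and replaces the register content $x$ by $xm$. A word is accepted if some computation reads it entirely and ends in an accepting state with register equal to $e$. $\mathfrak{L}(G)$ is the class of languages recognized by $G$-automata. $\mathbb{Q}^+$ is the multiplicative group of positive rationals; $SL(2,\mathbb{Q})$ is the group of $2\times2$ rational matrices of determinant $1$. *)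

(* Defs.v *)
From HB Require Import structures.
From mathcomp Require Import all_boot all_order all_algebra.
Set Implicit Arguments. Unset Strict Implicit. Unset Printing Implicit Defensive.
Import Order.TTheory GRing.Theory Num.Theory.
Local Open Scope ring_scope.

(* A G-automaton, where the group G is given as a subgroup (predicate) of the
   multiplicative monoid of a ring M; the register lives in M, starts at 1 and
   every transition label is required to lie in G (so the register stays in G
   and multiplication is the group multiplication of G). *)
Record gaut (M : eqType) (Sigma : eqType) := GAut {
  state : finType;
  init : state;
  acc : pred state;
  trans : seq (state * option Sigma * state * M)
}.

Inductive run (M : nzRingType) (Sigma : eqType) (A : gaut M Sigma)
  : state A -> seq Sigma -> state A -> M -> Prop :=
| run_nil p : @run M Sigma A p [::] p 1
| run_read p a p' m w q x :
    (p, Some a, p', m) \in @trans M Sigma A ->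
    @run M Sigma A p' w q x -> @run M Sigma A p (a :: w) q (m * x)
| run_eps p p' m w q x :
    (p, None, p', m) \in @trans M Sigma A ->
    @run M Sigma A p' w q x -> @run M Sigma A p w q (m * x).

Definition accepts (M : nzRingType) (Sigma : eqType) (A : gaut M Sigma)
  (w : seq Sigma) : Prop :=
  exists q, @run M Sigma A (@init M Sigma A) w q 1 /\ @acc M Sigma A q.

Definition is_gaut (M : nzRingType) (G : pred M) (Sigma : eqType)
  (A : gaut M Sigma) : Prop :=
  forall t, t \in @trans M Sigma A -> G t.2.

Definition in_LG (M : nzRingType) (G : pred M) (Sigma : finType)
  (L : seq Sigma -> Prop) : Prop :=
  exists A : gaut M Sigma, is_gaut G A /\ forall w, L w <-> accepts A w.

Definition Qpos : pred rat := fun q => 0 < q.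

Definition SL2Q : pred 'M[rat]_2 := fun A => \det A == 1.

(* Main.v *)
Require Import Defs.
From mathcomp Require Import all_boot all_order all_algebra.
From mathcomp Require Import zify ring lra.
Set Implicit Arguments. Unset Strict Implicit. Unset Printing Implicit Defensive.

Lemma order3 (T : Type) (f : nat -> T) m a b c :
  a != b -> b != c -> c != a -> f a = f b -> f b = f c -> a <= m -> b <= m -> c <= m ->
  exists i j k, [/\ i < j, j < k, k <= m, f i = f j & f j = f k].
Proof.
move=> nab nbc nca fab fbc am bm cm.
case: (ltngtP a b) => ab; case: (ltngtP b c) => bc; case: (ltngtP a c) => ac; try lia;
  first [ by exists a, b, c; split => //; congruence
        | by exists a, c, b; split => //; congruence
        | by exists b, a, c; split => //; congruence
        | by exists b, c, a; split => //; congruence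
        | by exists c, a, b; split => //; congruence
        | by exists c, b, a; split => //; congruence ].
Qed.

Lemma pigeon3 (T : finType) (f : nat -> T) m : 2 * #|T| <= m ->
  exists i j k, [/\ i < j, j < k, k <= m, f i = f j & f j = f k].
Proof.
move=> Hm; pose g (i : 'I_m.+1) := f i.
case: (boolP [exists t, 2 < #|[pred i | g i == t]|]) => [/existsP [t Ht]|/existsPn H].
- case/card_gt2P: Ht => x [y [z [[Hx Hy Hz] [nxy nyz nzx]]]].
  move: Hx Hy Hz; rewrite !inE /g => /eqP Hx /eqP Hy /eqP Hz.
  apply: (@order3 _ f m x y z) => //; try congruence; by rewrite -ltnS.
- exfalso.
  have : m.+1 <= 2 * #|T|.
    rewrite -{1}(card_ord m.+1) -sum1_card (partition_big g predT) //=.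
    apply: leq_trans (_ : \sum_(t in T) 2 <= _); last by rewrite sum_nat_const mulnC.
    apply: leq_sum => t _; rewrite sum1dep_card.
    have := H t; rewrite -leqNgt; apply: leq_trans; apply: subset_leq_card.
    by apply/subsetP => i; rewrite !inE.
  lia.
Qed.

Definition blk (l : nat) : seq bool := nseq l false ++ [:: true].

Fixpoint segn (a n : nat) : seq bool :=
  if n is n'.+1 then segn a n' ++ blk (a + n') else [::].

Lemma segn_add a n1 n2 : segn a (n1 + n2) = segn a n1 ++ segn (a + n1) n2.
Proof.
elim: n2 => [|n2 IH]; first by rewrite addn0 cats0.
by rewrite addnS /= IH catA addnA.
Qed.

Lemma segnS a n : segn a n.+1 = blk a ++ segn a.+1 n.
Proof. by rewrite -add1n segn_add /= addn0 addn1. Qed.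

Lemma segn_split a b c : a <= b -> b <= c ->
  segn a (c - a) = segn a (b - a) ++ segn b (c - b).
Proof.
move=> ab bc; have -> : c - a = (b - a) + (c - b) by lia.
by rewrite segn_add subnKC.
Qed.

Lemma nth_blk a b s : b <= a -> nth false (blk a ++ s) b = (b == a).
Proof.
move=> ba; rewrite nth_cat /blk size_cat size_nseq /= addn1 ltnS ba nth_cat size_nseq.
case: ltnP => h.
- by rewrite nth_nseq h; apply/esym/negbTE; rewrite neq_ltn h.
- have -> : b = a by lia.
  by rewrite subnn eqxx.
Qed.

Lemma seg_neq i j k s1 s2 : i < j -> j < k ->
  segn j (k - j) ++ s1 <> segn i (j - i) ++ s2.
Proof.
move=> ij jk E.
have := congr1 (fun s => nth false s i) E => /=.
have -> : k - j = (k - j).-1.+1 by lia.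
have -> : j - i = (j - i).-1.+1 by lia.
rewrite !segnS /blk -!catA !nth_cat !size_nseq ij ltnn subnn nth_nseq ij /=; discriminate.
Qed.

Import Order.TTheory GRing.Theory Num.Theory.
Local Open Scope ring_scope.

Definition mx2 (a b c d : rat) : 'M[rat]_2 :=
  \matrix_(i, j) if (i : nat) == 0%N then (if (j : nat) == 0%N then a else b)
                 else (if (j : nat) == 0%N then c else d).

Lemma mx2_det a b c d : \det (mx2 a b c d) = a * d - b * c.
Proof.
rewrite (expand_det_row _ 0) !big_ord_recl big_ord0 /cofactor !det_mx11 !mxE /=.
rewrite /bump /= !add0n addn0 expr0 expr1; ring.
Qed.

Lemma mx2_mul a b c d a' b' c' d' :
  mx2 a b c d * mx2 a' b' c' d' =
  mx2 (a*a' + b*c') (a*b' + b*d') (c*a' + d*c') (c*b' + d*d').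
Proof.
rewrite -mulmxE; apply/matrixP => i j; rewrite !mxE !big_ord_recl big_ord0 !mxE /=.
case: i => [[|[|i]]] Hi; case: j => [[|[|j]]] Hj //=; rewrite ?addr0 //.
Qed.

Lemma mx2_1 : (1 : 'M[rat]_2) = mx2 1 0 0 1.
Proof.
apply/matrixP => i j; rewrite !mxE.
by case: i => [[|[|i]]] Hi; case: j => [[|[|j]]] Hj.
Qed.

Lemma mx2_inj a b c d a' b' c' d' : mx2 a b c d = mx2 a' b' c' d' ->
  [/\ a = a', b = b', c = c' & d = d'].
Proof.
move=> E.
have e := fun i j => congr1 (fun M : 'M[rat]_2 => M i j) E.
move: (e 0 0) (e 0 1) (e 1 0) (e 1 1); rewrite !mxE /=. by [].
Qed.

Section Runs.
Variables (M : nzRingType) (Sigma : eqType) (A : gaut M Sigma).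

Lemma run_cat p w1 r x1 w2 q x2 :
  run (A:=A) p w1 r x1 -> run (A:=A) r w2 q x2 -> run (A:=A) p (w1 ++ w2) q (x1 * x2).
Proof.
elim=> [p0|p0 a p' m w q0 x H _ IH|p0 p' m w q0 x H _ IH] R2.
- by rewrite mul1r.
- by rewrite -mulrA; apply: run_read H (IH R2).
- by rewrite -mulrA; apply: run_eps H (IH R2).
Qed.

Lemma run_split p w1 w2 q x : run (A:=A) p (w1 ++ w2) q x ->
  exists r x1 x2, [/\ run (A:=A) p w1 r x1, run (A:=A) r w2 q x2 & x = x1 * x2].
Proof.
move E : (w1 ++ w2) => w R; elim: R w1 E => [p0|p0 a p' m w0 q0 x0 H R IH|p0 p' m w0 q0 x0 H R IH] w1 E.
- case: w1 E => [|//] /= ->; exists p0, 1, 1; split; [exact: run_nil|exact: run_nil|by rewrite mulr1].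
- case: w1 E => [|b w1] /= E.
  + exists p0, 1, (m * x0); split; [exact: run_nil| by rewrite E; apply: run_read H R| by rewrite mul1r].
  + case: E => -> E; have [r [x1 [x2 [R1 R2 ->]]]] := IH _ E.
    exists r, (m * x1), x2; split => //; [exact: run_read H R1| by rewrite mulrA].
- have [r [x1 [x2 [R1 R2 ->]]]] := IH _ E.
  exists r, (m * x1), x2; split => //; [exact: run_eps H R1| by rewrite mulrA].
Qed.
End Runs.

Definition phi (q : rat) : 'M[rat]_2 := mx2 q 0 0 q^-1.

Lemma phiM x y : phi (x * y) = phi x * phi y.
Proof. rewrite /phi mx2_mul invfM; congr mx2; ring. Qed.

Lemma phi1 : phi 1 = 1.
Proof. by rewrite /phi invr1 mx2_1. Qed.

Section Part1.
Variables (Sigma : finType) (A : gaut rat Sigma).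

Definition ftr (t : state A * option Sigma * state A * rat) :
  state A * option Sigma * state A * 'M[rat]_2 := (t.1, phi t.2).

Definition BA : gaut 'M[rat]_2 Sigma := GAut (init A) (@acc _ _ A) (map ftr (trans A)).

Lemma runAB p w q x : run (A:=A) p w q x -> run (A:=BA) p w q (phi x).
Proof.
elim=> [p0|p0 a p' m w0 q0 x0 H _ IH|p0 p' m w0 q0 x0 H _ IH].
- rewrite phi1; exact: run_nil.
- rewrite phiM; apply: run_read IH; exact: (map_f ftr H).
- rewrite phiM; apply: run_eps IH; exact: (map_f ftr H).
Qed.

Lemma runBA p w q X : run (A:=BA) p w q X -> exists x, run (A:=A) p w q x /\ X = phi x.
Proof.
elim=> [p0|p0 a p' m w0 q0 x0 H _ IH|p0 p' m w0 q0 x0 H _ IH].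
- exists 1; split; [exact: run_nil| by rewrite phi1].
- have [x [R ->]] := IH.
  case/mapP: H => [[[[s o] s'] m0]] H [E1 E2 E3 E4]; subst.
  exists (m0 * x); split; [exact: run_read H R| by rewrite phiM].
- have [x [R ->]] := IH.
  case/mapP: H => [[[[s o] s'] m0]] H [E1 E2 E3 E4]; subst.
  exists (m0 * x); split; [exact: run_eps H R| by rewrite phiM].
Qed.

Lemma part1 (L : seq Sigma -> Prop) : is_gaut Qpos A -> (forall w, L w <-> accepts A w) ->
  in_LG SL2Q L.
Proof.
move=> HA HL; exists BA; split.
- move=> t /mapP [t0 H ->]; rewrite /SL2Q /= /phi mx2_det.
  have := HA _ H; rewrite /Qpos => Hp.
  rewrite mulr0 subr0 mulfV //; by rewrite gt_eqF.
- move=> w; rewrite HL; split.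
  + case=> q [R Hq]; exists q; split => //; by have := runAB R; rewrite phi1.
  + case=> q [R Hq]; exists q; split => //.
    have [x [R' E]] := runBA R.
    have [E1 _ _ _] := mx2_inj (etrans (esym mx2_1) E).
    by rewrite E1.
Qed.
End Part1.

Definition D (e : bool) : 'M[rat]_2 := if e then mx2 1 0 2 1 else mx2 1 2 0 1.
Definition Di (e : bool) : 'M[rat]_2 := if e then mx2 1 0 (-2) 1 else mx2 1 (-2) 0 1.

Lemma DDi e : D e * Di e = 1.
Proof. by rewrite mx2_1; case: e; rewrite /D /Di mx2_mul; congr mx2; ring. Qed.
Lemma DiD e : Di e * D e = 1.
Proof. by rewrite mx2_1; case: e; rewrite /D /Di mx2_mul; congr mx2; ring. Qed.

Definition Mw (u : seq bool) := foldr (fun e acc => D e * acc) 1 u.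
Definition Nw (u : seq bool) := foldr (fun e acc => Di e * acc) 1 u.

Lemma Mw_cat u v : Mw (u ++ v) = Mw u * Mw v.
Proof. by elim: u => [|e u IH] /=; rewrite ?mul1r // IH mulrA. Qed.

Lemma MN v : Mw (rev v) * Nw v = 1 /\ Nw v * Mw (rev v) = 1.
Proof.
elim: v => [|e v [IH1 IH2]] /=; first by rewrite mulr1.
rewrite rev_cons -cats1 Mw_cat /= mulr1; split.
- by rewrite -mulrA (mulrA (D e)) DDi mul1r.
- by rewrite mulrA -(mulrA (Di e)) IH2 mulr1 DiD.
Qed.

Lemma Mw_shape u : exists a b c d, Mw u = mx2 a b c d /\
  [/\ 0 <= a, 0 <= b, 0 <= c, 0 <= d & a * d - b * c = 1].
Proof.
elim: u => [|e u [a [b [c [d [Eu [Ha Hb Hc Hd Hdet]]]]]]].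
  by exists 1, 0, 0, 1; split; [exact: mx2_1| split => //; ring].
change (Mw (e :: u)) with (D e * Mw u); rewrite Eu.
case: e; rewrite /D mx2_mul.
- exists a, b, (2 * a + c), (2 * b + d); split; first by congr mx2; ring.
  split; [lra|lra|lra|lra|]. rewrite -Hdet; ring.
- exists (a + 2 * c), (b + 2 * d), c, d; split; first by congr mx2; ring.
  split; [lra|lra|lra|lra|]. rewrite -Hdet; ring.
Qed.

Lemma Mw_inj u v : Mw u = Mw v -> u = v.
Proof.
elim: u v => [|e u IH] [|f v] //.
- change (1 = D f * Mw v -> [::] = f :: v).
  have [a [b [c [d [-> [Ha Hb Hc Hd Hdet]]]]]] := Mw_shape v.
  rewrite mx2_1; case: f; rewrite /D mx2_mul => /mx2_inj [E1 E2 E3 E4]; exfalso; lra.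
- change (D e * Mw u = 1 -> e :: u = [::]).
  have [a [b [c [d [-> [Ha Hb Hc Hd Hdet]]]]]] := Mw_shape u.
  rewrite mx2_1; case: e; rewrite /D mx2_mul => /mx2_inj [E1 E2 E3 E4]; exfalso; lra.
- change (D e * Mw u = D f * Mw v -> e :: u = f :: v) => E.
  have [a [b [c [d [Eu [Ha Hb Hc Hd Hdet]]]]]] := Mw_shape u.
  have [a' [b' [c' [d' [Ev [Ha' Hb' Hc' Hd' Hdet']]]]]] := Mw_shape v.
  case: (boolP (e == f)) => [/eqP Eef|Nef].
  + subst f; congr cons; apply: IH.
    by rewrite -[Mw u]mul1r -(DiD e) -mulrA E mulrA DiD mul1r.
  + exfalso; move: E; rewrite Eu Ev.
    case: e f Nef => [] [] //= _; rewrite /D !mx2_mul => /mx2_inj [E1 E2 E3 E4].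
    * have a0 : a = 0 by lra. have c0 : c = 0 by lra.
      move: Hdet; rewrite a0 c0; lra.
    * have a0 : a' = 0 by lra. have c0 : c' = 0 by lra.
      move: Hdet'; rewrite a0 c0; lra.
Qed.

Definition trP : seq (bool * option bool * bool * 'M[rat]_2) :=
  [:: (false, Some false, false, D false); (false, Some true, false, D true);
      (false, None, true, 1);
      (true, Some false, true, Di false); (true, Some true, true, Di true)].

Definition PA : gaut 'M[rat]_2 bool := @GAut _ _ bool false (fun s => s) trP.

Lemma trP_read p a p' m : (p, Some a, p', m) \in trP -> p' = p /\ m = (if p then Di a else D a).
Proof. by case: p a p' => [] [] []; rewrite !inE !xpair_eqE /= ?orbF ?orFb ?andbF // => /eqP. Qed.

Lemma trP_eps p p' m : (p, None, p', m) \in trP -> [/\ p = false, p' = true & m = 1].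
Proof. by case: p p' => [] []; rewrite !inE !xpair_eqE /= ?orbF ?orFb ?andbF // => /eqP. Qed.

Lemma PA_run p w q x : run (A:=PA) p w q x ->
  if p then q = true /\ x = Nw w
  else (q = false /\ x = Mw w) \/ (q = true /\ exists u v, w = u ++ v /\ x = Mw u * Nw v).
Proof.
elim=> [p0|p0 a p' m w0 q0 x0 H _ IH|p0 p' m w0 q0 x0 H _ IH].
- by case: p0; [|left].
- have [E1 ->] := trP_read H; subst p'; clear H; case: p0 IH => /=.
  + by case=> -> ->.
  + case => [[-> ->]|[-> [u [v [-> ->]]]]]; [left|right]; split => //.
    by exists (a :: u), v; rewrite mulrA.
- have [E1 E2 E3] := trP_eps H; subst; clear H; move: IH => /= [-> ->].
  right; split => //; exists [::], w0; by rewrite mul1r.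
Qed.

Lemma runM w : run (A:=PA) false w false (Mw w).
Proof.
elim: w => [|e w IH]; first exact: run_nil.
apply: run_read IH; by case: e; rewrite !inE eqxx ?orbT.
Qed.

Lemma runN w : run (A:=PA) true w true (Nw w).
Proof.
elim: w => [|e w IH]; first exact: run_nil.
apply: run_read IH; by case: e; rewrite !inE eqxx ?orbT.
Qed.

Definition Lpal (w : seq bool) : Prop := exists u, w = u ++ rev u.

Lemma PA_ok w : Lpal w <-> accepts PA w.
Proof.
split.
- case=> u ->; exists true; split => //.
  have R : run (A:=PA) false (u ++ rev u) true (Mw u * (1 * Nw (rev u))).
    apply: run_cat (runM u) _; apply: run_eps (runN _); by rewrite !inE eqxx ?orbT.
  have E := proj1 (MN (rev u)); rewrite revK in E.
  by move: R; rewrite mul1r E.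
- case=> q [R Hq]; have := PA_run R; rewrite /=; case => [[Eq _]|[_ [u [v [-> E]]]]]; first by rewrite Eq in Hq.
  exists u; congr (_ ++ _).
  have [H1 H2] := MN v.
  have : Mw u = Mw (rev v) by rewrite -[Mw u]mulr1 -H2 mulrA -E mul1r.
  by move/Mw_inj ->; rewrite revK.
Qed.

Section Part2.
Variable A : gaut rat bool.

Lemma run_blocks p m w q x : run (A:=A) p (segn 0 m ++ w) q x ->
  exists (st : nat -> state A) (v : nat -> rat) y,
  [/\ st 0%N = p, (forall i, (i < m)%N -> run (A:=A) (st i) (blk i) (st i.+1) (v i)),
      run (A:=A) (st m) w q y & x = (\prod_(0 <= i < m) v i) * y].
Proof.
elim: m w q x => [|m IH] w q x /= R.
- exists (fun _ => p), (fun _ => 1), x; split => //; by rewrite big_geq // mul1r.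
- rewrite -catA in R; have [st [v [y [H0 Hb Hw Ex]]]] := IH _ _ _ R.
  have [r [y1 [y2 [R1 R2 Ey]]]] := run_split Hw.
  exists (fun i => if i == m.+1 then r else st i), (fun i => if i == m then y1 else v i), y2.
  split => //.
  + move=> i; rewrite ltnS leq_eqVlt => /orP [/eqP ->|im].
    * by rewrite eqxx (ltn_eqF (ltnSn m)) eqxx.
    * by rewrite (ltn_eqF im) eqSS (ltn_eqF im) (ltn_eqF (ltn_trans im (ltnSn m))); apply: Hb.
  + by rewrite eqxx.
  + rewrite big_nat_recr //= eqxx.
    have -> : \prod_(0 <= i < m) (if i == m then y1 else v i) = \prod_(0 <= i < m) v i.
      by apply: eq_big_nat => i /andP [_ Hi]; rewrite (ltn_eqF Hi).
    by rewrite Ex Ey mulrA.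
Qed.

Lemma run_seg (st : nat -> state A) (v : nat -> rat) m :
  (forall i, (i < m)%N -> run (A:=A) (st i) (blk i) (st i.+1) (v i)) ->
  forall a b, (a <= b)%N -> (b <= m)%N ->
  run (A:=A) (st a) (segn a (b - a)) (st b) (\prod_(a <= l < b) v l).
Proof.
move=> Hb a; elim=> [|b IH] ab bm.
- rewrite leqn0 in ab; move/eqP: ab => ->; rewrite big_geq //; exact: run_nil.
- move: ab; rewrite leq_eqVlt => /orP [/eqP ->|ab].
  + rewrite subnn big_geq //; exact: run_nil.
  + rewrite ltnS in ab; rewrite subSn // /= subnKC // big_nat_recr //.
    apply: run_cat (IH ab (ltnW bm)) (Hb _ bm).
Qed.

End Part2.

Lemma not_Qpos : ~ in_LG Qpos Lpal.
Proof.
case=> A [_ HL].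
set m := (2 * #|state A|)%N.
set u := segn 0 m.
have : accepts A (u ++ rev u) by apply/HL; exists u.
case=> q [R Hq].
have [st [v [y [H0 Hb Hw Ex]]]] := run_blocks R.
have [i [j [k [ij jk km E1 E2]]]] := pigeon3 st (leqnn m).
have R1 := run_seg Hb (leq0n i) (ltnW (leq_trans ij (ltnW (leq_trans jk km)))).
have R2 := run_seg Hb (ltnW ij) (ltnW (leq_trans jk km)).
have R3 := run_seg Hb (ltnW jk) km.
have R4 := run_seg Hb km (leqnn m).
rewrite subn0 in R1.
have Hu : u = segn 0 i ++ segn i (j - i) ++ segn j (k - j) ++ segn k (m - k).
  rewrite /u -{1}(subn0 m) (@segn_split 0 i m) //; last by lia.
  rewrite subn0 (@segn_split i j m); [|lia|lia].
  by rewrite (@segn_split j k m) //; lia.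
have Hprod : \prod_(0 <= l < m) v l = \prod_(0 <= l < i) v l * \prod_(i <= l < j) v l *
    \prod_(j <= l < k) v l * \prod_(k <= l < m) v l.
  rewrite (@big_cat_nat _ _ _ k 0 m) //.
  rewrite (@big_cat_nat _ _ _ j 0 k) //; last exact: ltnW.
  rewrite (@big_cat_nat _ _ _ i 0 j) //; exact: ltnW.
set X := segn 0 i ++ segn j (k - j) ++ segn i (j - i) ++ segn k (m - k).
have RX : run (A:=A) (st 0%N) (X ++ rev u) q 1.
  rewrite -E1 in R2; rewrite -E2 -E1 in R3; rewrite -E2 -E1 in R4.
  have := run_cat R1 (run_cat R3 (run_cat R2 (run_cat R4 Hw))).
  have E : \prod_(0 <= l < i) v l * (\prod_(j <= l < k) v l *
    (\prod_(i <= l < j) v l * (\prod_(k <= l < m) v l * y))) = 1.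
    by rewrite [RHS]Ex Hprod; ring.
  by rewrite /X -!catA E.
have : Lpal (X ++ rev u) by apply/HL; exists q; rewrite -H0.
case=> t Et.
have sX : size X = size u by rewrite Hu /X !size_cat; lia.
have st_ : size t = size u.
  have := congr1 size Et; rewrite size_cat [size (t ++ _)]size_cat !size_rev sX; lia.
move/eqP: Et; rewrite eqseq_cat; last by rewrite sX st_.
case/andP => /eqP Xt /eqP ut.
have : X = u by rewrite Xt -(revK u) ut revK.
rewrite /X Hu => /eqP; rewrite eqseq_cat // => /andP [_ /eqP E].
exact: seg_neq ij jk E.
Qed.

Theorem theorem3p12 :
  (forall (Sigma : finType) (L : seq Sigma -> Prop),
      in_LG Qpos L -> in_LG SL2Q L) /\
  (exists (Sigma : finType) (L : seq Sigma -> Prop),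
      in_LG SL2Q L /\ ~ in_LG Qpos L).
Proof.
split.
- move=> Sigma L [A [HA HL]]; exact: part1 HA HL.
- exists bool, Lpal; split; last exact: not_Qpos.
  exists PA; split; last exact: PA_ok.
  move=> t H; have : t \in trP := H.
  rewrite !inE => /orP [/eqP ->|/orP [/eqP ->|/orP [/eqP ->|/orP [/eqP ->|/eqP ->]]]];
    rewrite /SL2Q /= /D /Di ?mx2_1 mx2_det; apply/eqP; ring.
Qed.
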